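(* Let $f,g\in\mathrm{Diffeo}^-(\mathbb{R})$ with $f(0)=g(0)=0$ and $f\circ f=g\circ g$. Suppose $(T_0f)\circ(T_0f)\neq X$. Then $T_0f=T_0g$, and $f$ is conjugate to $g$ by an element of $\mathrm{Diffeo}^+(\mathbb{R})$, i.e. $f=h^{-1}\circ g\circ h$ for some $h\in\mathrm{Diffeo}^+(\mathbb{R})$.
   Context: $\mathrm{Diffeo}(\mathbb{R})$ is the group of $C^\infty$ diffeomorphisms of $\mathbb{R}$ under composition; $\mathrm{Diffeo}^+(\mathbb{R})$ (resp. $\mathrm{Diffeo}^-(\mathbb{R})$) is the set of orientation-preserving (resp. orientation-reversing) diffeomorphisms. For a diffeomorphism $\phi$ with $\phi(0)=0$, $T_0\phi=\phi'(0)X+\frac{\phi''(0)}{2}X^2+\cdots$ is its Taylor series at $0$, viewed as a formal power series under formal composition; $X$ denotes the identity series. *)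

(* Defs.v *)
From Stdlib Require Import Reals Factorial.
From Coquelicot Require Import Coquelicot.
Open Scope R_scope.

Definition smooth (f : R -> R) : Prop :=
  forall (n : nat) (x : R), ex_derive_n f n x.

Definition is_diffeo (f : R -> R) : Prop :=
  smooth f /\ exists g : R -> R, smooth g /\
    (forall x, g (f x) = x) /\ (forall x, f (g x) = x).

Definition is_diffeo_plus (f : R -> R) : Prop :=
  is_diffeo f /\ (forall x y, x < y -> f x < f y).

Definition is_diffeo_minus (f : R -> R) : Prop :=
  is_diffeo f /\ (forall x y, x < y -> f y < f x).

Definition fps := nat -> R.

Definition taylor0 (phi : R -> R) : fps :=
  fun n => Derive_n phi n 0 / INR (fact n).

Definition fpsX : fps := fun n => if Nat.eqb n 1 then 1 else 0.

Definition fps_one : fps := fun n => if Nat.eqb n 0 then 1 else 0.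

Definition fps_mul (a b : fps) : fps :=
  fun n => sum_f_R0 (fun k => a k * b (n - k)%nat) n.

Fixpoint fps_pow (b : fps) (k : nat) : fps :=
  match k with
  | O => fps_one
  | S k' => fps_mul b (fps_pow b k')
  end.

(* Formal composition a o b (meaningful when b 0 = 0: then b^k has order >= k,
   so coefficient n only involves k <= n). *)
Definition fps_comp (a b : fps) : fps :=
  fun n => sum_f_R0 (fun k => a k * fps_pow b k n) n.

(* Main.v *)
Require Import Defs.
From Stdlib Require Import Reals.
From Coquelicot Require Import Coquelicot.
From Stdlib Require Import Lra Lia Factorial Classical FunctionalExtensionality.
Open Scope R_scope.

Lemma sum_zero (f : nat -> R) N : (forall k, (k <= N)%nat -> f k = 0) -> sum_f_R0 f N = 0.
Proof.
  induction N; intros H; simpl. apply H; lia.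
  rewrite IHN. rewrite H; [ring|lia]. intros; apply H; lia.
Qed.

Lemma sum_single (f : nat -> R) N k0 : (k0 <= N)%nat ->
  (forall k, (k <= N)%nat -> k <> k0 -> f k = 0) -> sum_f_R0 f N = f k0.
Proof.
  induction N; intros Hk H.
  - simpl. replace k0 with 0%nat by lia. reflexivity.
  - simpl. destruct (Nat.eq_dec k0 (S N)) as [->|Hne].
    + rewrite sum_zero. ring. intros k Hk'. apply H; lia.
    + rewrite IHN by (first [lia | intros; apply H; lia]). rewrite (H (S N)); [ring|lia|lia].
Qed.

Lemma fps_pow_S b k m : fps_pow b (S k) m = sum_f_R0 (fun i => b i * fps_pow b k (m - i)%nat) m.
Proof. reflexivity. Qed.

Lemma fps_one_val m : fps_one m = if Nat.eqb m 0 then 1 else 0.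
Proof. reflexivity. Qed.

Lemma pow_low b : b 0%nat = 0 -> forall k m, (m < k)%nat -> fps_pow b k m = 0.
Proof.
  intros H0 k. induction k; intros m Hm. lia.
  rewrite fps_pow_S. apply sum_zero. intros i Hi.
  destruct i. rewrite H0; ring. rewrite IHk by lia. ring.
Qed.

Lemma pow_diag b : b 0%nat = 0 -> forall k, fps_pow b k k = b 1%nat ^ k.
Proof.
  intros H0 k. induction k. reflexivity.
  rewrite fps_pow_S. rewrite (sum_single _ _ 1%nat) by
    (first [lia | intros i Hi Hne; destruct i; [rewrite H0; ring|rewrite pow_low by (auto; lia); ring]]).
  replace (S k - 1)%nat with k by lia. rewrite IHk. simpl. ring.
Qed.

Lemma pow_one b m : fps_pow b 1 m = b m.
Proof.
  rewrite fps_pow_S. rewrite (sum_single _ _ m) by (first [lia | intros i Hi Hne;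
    simpl; rewrite fps_one_val; destruct (Nat.eqb_spec (m - i) 0); [lia|ring]]).
  rewrite Nat.sub_diag. simpl. unfold fps_one. simpl. ring.
Qed.

Lemma powX k m : fps_pow fpsX k m = if Nat.eqb m k then 1 else 0.
Proof.
  revert m; induction k; intros m. reflexivity.
  rewrite fps_pow_S. destruct m.
  - simpl. unfold fpsX. simpl. ring.
  - rewrite (sum_single _ _ 1%nat) by (first [lia | intros i Hi Hne; unfold fpsX;
      destruct (Nat.eqb_spec i 1); [lia|ring]]).
    unfold fpsX; simpl. rewrite IHk. replace (m - 0)%nat with m by lia. ring_simplify. reflexivity.
Qed.

Lemma pow_pert (A B : fps) n : (2 <= n)%nat -> A 0%nat = 0 -> B 0%nat = 0 ->
  (forall j, (j < n)%nat -> A j = B j) ->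
  forall k, (forall m, (m < n + k - 1)%nat -> fps_pow A k m = fps_pow B k m) /\
    fps_pow A k (n + k - 1)%nat - fps_pow B k (n + k - 1)%nat = INR k * A 1%nat ^ (k - 1)%nat * (A n - B n).
Proof.
  intros Hn HA0 HB0 Hj k. induction k as [|k [IH1 IH2]].
  - split; [reflexivity|]. simpl. ring.
  - assert (Hgen : forall m, fps_pow A (S k) m - fps_pow B (S k) m =
       sum_f_R0 (fun i => (A i - B i) * fps_pow A k (m - i)%nat) m +
       sum_f_R0 (fun i => B i * (fps_pow A k (m - i)%nat - fps_pow B k (m - i)%nat)) m).
    { intros m. rewrite !fps_pow_S, <- plus_sum, <- minus_sum. apply sum_eq. intros; ring. }
    assert (T1 : forall m, (m < n + k)%nat ->
       sum_f_R0 (fun i => (A i - B i) * fps_pow A k (m - i)%nat) m = 0).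
    { intros m Hm. apply sum_zero. intros i Hi. destruct (Nat.lt_ge_cases i n).
      rewrite Hj by lia. ring. rewrite pow_low by (auto; lia). ring. }
    assert (T2 : forall m, (m < n + k)%nat ->
       sum_f_R0 (fun i => B i * (fps_pow A k (m - i)%nat - fps_pow B k (m - i)%nat)) m = 0).
    { intros m Hm. apply sum_zero. intros i Hi. destruct i. rewrite HB0; ring.
      rewrite IH1 by lia. ring. }
    split.
    + intros m Hm. apply Rminus_diag_uniq. rewrite Hgen, T1, T2 by lia. ring.
    + replace (n + S k - 1)%nat with (n + k)%nat by lia. rewrite Hgen.
      rewrite (sum_single _ _ n) by (first [lia | intros i Hi Hne; destruct (Nat.lt_ge_cases i n);
          [rewrite Hj by lia; ring| rewrite pow_low by (auto; lia); ring]]).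
      rewrite (sum_single _ _ 1%nat) by (first [lia | intros i Hi Hne; destruct i;
          [rewrite HB0; ring| rewrite IH1 by lia; ring]]).
      replace (n + k - n)%nat with k by lia. replace (n + k - 1)%nat with (n + k - 1)%nat by lia.
      rewrite IH2, pow_diag by auto. rewrite <- (Hj 1%nat) by lia.
      rewrite S_INR. destruct k. simpl. ring. replace (S k - 1)%nat with k by lia. simpl. ring.
Qed.

Lemma pow_one' b m : fps_mul b fps_one m = b m.
Proof. exact (pow_one b m). Qed.

Lemma min_ex (P : nat -> Prop) : (exists n, P n) -> exists n, P n /\ forall m, (m < n)%nat -> ~ P m.
Proof.
  intros [n Hn]. revert Hn. induction n as [n IH] using (well_founded_ind Wf_nat.lt_wf). intros Hn.
  destruct (classic (exists m, (m < n)%nat /\ P m)) as [[m [Hm Pm]]|Hno].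
  - exact (IH m Hm Pm).
  - exists n. split; auto. intros m Hm Pm. apply Hno; eauto.
Qed.

Lemma comp_val a b m : fps_comp a b m = sum_f_R0 (fun k => a k * fps_pow b k m) m.
Proof. reflexivity. Qed.

Lemma neg_pow_m1 a n : a < 0 -> (1 <= n)%nat -> a ^ n = -1 -> a = -1.
Proof.
  intros Ha Hn H. assert (Habs : Rabs a ^ n = 1).
  { rewrite RPow_abs, H. rewrite Rabs_left by lra. ring. }
  rewrite Rabs_left in Habs by lra.
  destruct (Rtotal_order (-a) 1) as [Hl|[He|Hg]].
  - pose proof (pow_lt_1_compat (-a) n ltac:(lra) ltac:(lia)). lra.
  - lra.
  - pose proof (Rlt_pow_R1 (-a) n Hg ltac:(lia)). lra.
Qed.

Lemma pow_m1_pred n : (1 <= n)%nat -> (-1) ^ n = - (-1) ^ (n - 1).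
Proof. intros H. replace n with (S (n - 1)) at 1 by lia. simpl. ring. Qed.

Lemma formal_main (A B F : fps) :
  A 0%nat = 0 -> B 0%nat = 0 -> A 1%nat < 0 -> B 1%nat < 0 ->
  fps_comp A A = F -> fps_comp B B = F ->
  fps_comp A F = fps_comp F A -> fps_comp B F = fps_comp F B ->
  F <> fpsX -> forall n, A n = B n.
Proof.
  intros HA0 HB0 HA1 HB1 HAA HBB HAF HBF HFX.
  assert (HF1a : F 1%nat = A 1%nat * A 1%nat).
  { rewrite <- HAA, comp_val. simpl. rewrite pow_one', HA0. unfold fps_one. simpl. ring. }
  assert (HF1b : F 1%nat = B 1%nat * B 1%nat).
  { rewrite <- HBB, comp_val. simpl. rewrite pow_one', HB0. unfold fps_one. simpl. ring. }
  assert (Hab : A 1%nat = B 1%nat) by nra.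
  set (a := A 1%nat) in *.
  assert (HF0 : F 0%nat = 0). { rewrite <- HAA, comp_val. simpl. rewrite HA0. ring. }
  assert (Hall : forall n, forall j, (j < n)%nat -> A j = B j).
  2:{ intros n. apply (Hall (S n)). lia. }
  intros n. induction n as [|n IH]. intros; lia.
  intros j Hj. destruct (Nat.lt_ge_cases j n) as [Hjn|Hjn]. apply IH; auto.
  replace j with n by lia. clear j Hj Hjn.
  destruct n as [|[|n0]]. { rewrite HA0, HB0; auto. } { exact Hab. }
  set (n := S (S n0)) in *. assert (Hn2 : (2 <= n)%nat) by lia.
  pose proof (pow_pert A B n Hn2 HA0 HB0 IH) as PP.
  set (d0 := A n - B n).
  assert (Eq1 : (a + a ^ n) * d0 = 0).
  { assert (H := f_equal (fun G => G n) (eq_trans HAA (eq_sym HBB))). simpl in H.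
    rewrite !comp_val in H.
    assert (Hs : sum_f_R0 (fun k => A k * fps_pow A k n) n - sum_f_R0 (fun k => B k * fps_pow B k n) n
      = sum_f_R0 (fun k => A k * (fps_pow A k n - fps_pow B k n)) n +
        sum_f_R0 (fun k => (A k - B k) * fps_pow B k n) n).
    { rewrite <- minus_sum, <- plus_sum. apply sum_eq. intros; ring. }
    rewrite (sum_single (fun k => A k * (fps_pow A k n - fps_pow B k n)) _ 1%nat) in Hs.
    2: lia.
    2:{ intros k Hk Hne. destruct k. cbv [fps_pow]. ring. destruct k. lia.
        rewrite (proj1 (PP (S (S k)))) by lia. ring. }
    rewrite (sum_single (fun k => (A k - B k) * fps_pow B k n) _ n) in Hs.
    2: lia.
    2:{ intros k Hk Hne. rewrite IH by lia. ring. }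
    pose proof (proj2 (PP 1%nat)) as P1'. replace (n + 1 - 1)%nat with n in P1' by lia.
    rewrite P1' in Hs. rewrite pow_diag in Hs by auto. rewrite <- Hab in Hs.
    fold a d0 in Hs. replace ((a + a ^ n) * d0) with (a * (INR 1 * a ^ (1 - 1) * d0) + d0 * a ^ n) by (simpl; ring). rewrite <- Hs, H. ring. }
  destruct (Req_dec (a + a ^ n) 0) as [Hz|Hnz].
  2:{ apply Rminus_diag_uniq. fold d0. apply (Rmult_eq_reg_l (a + a ^ n)); auto. lra. }
  assert (Han1 : a ^ (n - 1) = -1).
  { assert (E : a ^ n = a * a ^ (n - 1)).
    { rewrite tech_pow_Rmult. f_equal; lia. }
    rewrite E in Hz. apply (Rmult_eq_reg_l a); [|lra].
    replace (a * -1) with (-a) by ring. lra. }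
  assert (Ham : a = -1) by (apply (neg_pow_m1 a (n-1)); auto; lia).
  rewrite Ham in Han1.
  assert (HF1 : F 1%nat = 1) by (rewrite HF1a; fold a; rewrite Ham; ring).
  assert (Hex : exists p, (2 <= p)%nat /\ F p <> 0).
  { apply NNPP. intros Hno. apply HFX. apply functional_extensionality. intros j.
    unfold fpsX. destruct j as [|[|j]]; simpl; auto.
    apply NNPP. intros Hj. apply Hno. exists (S (S j)). split; [lia|auto]. }
  destruct (min_ex _ Hex) as [p [[Hp2 Hpd] Hpmin]].
  assert (HFX' : forall j, (j < p)%nat -> F j = fpsX j).
  { intros j Hj. destruct j as [|[|j]]. rewrite HF0; reflexivity. rewrite HF1; reflexivity.
    apply NNPP. intros Hne. apply (Hpmin (S (S j))); auto. split; [lia|].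
    unfold fpsX in Hne. simpl in Hne. auto. }
  assert (HF0' : fpsX 0%nat = 0) by reflexivity.
  pose proof (pow_pert F fpsX p Hp2 HF0 HF0' HFX') as QQ.
  set (d := F p).
  assert (HXp : fpsX p = 0). { unfold fpsX. destruct (Nat.eqb_spec p 1); [lia|reflexivity]. }
  assert (Hodd : (-1) ^ p = -1).
  { assert (H := f_equal (fun G => G p) HAF). simpl in H. rewrite !comp_val in H.
    assert (L : sum_f_R0 (fun k => A k * fps_pow F k p) p = A p + a * d).
    { transitivity (sum_f_R0 (fun k => A k * fps_pow fpsX k p) p +
                    sum_f_R0 (fun k => A k * (fps_pow F k p - fps_pow fpsX k p)) p).
      rewrite <- plus_sum. apply sum_eq; intros; ring.
      rewrite (sum_single _ _ p).
      2: lia.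
      2:{ intros k Hk Hne. rewrite powX. destruct (Nat.eqb_spec p k); [lia|ring]. }
      rewrite (sum_single _ _ 1%nat).
      2: lia.
      2:{ intros k Hk Hne. destruct k. cbv [fps_pow]. ring. destruct k. lia.
          rewrite (proj1 (QQ (S (S k)))) by lia. ring. }
      pose proof (proj2 (QQ 1%nat)) as Q1. replace (p + 1 - 1)%nat with p in Q1 by lia.
      rewrite Q1, powX, Nat.eqb_refl, HXp. fold d. simpl. fold a. ring. }
    assert (Rr : sum_f_R0 (fun k => F k * fps_pow A k p) p = A p + d * a ^ p).
    { transitivity (sum_f_R0 (fun k => fpsX k * fps_pow A k p) p +
                    sum_f_R0 (fun k => (F k - fpsX k) * fps_pow A k p) p).
      rewrite <- plus_sum. apply sum_eq; intros; ring.
      rewrite (sum_single _ _ 1%nat).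
      2: lia.
      2:{ intros k Hk Hne. unfold fpsX. destruct (Nat.eqb_spec k 1); [lia|ring]. }
      rewrite (sum_single _ _ p).
      2: lia.
      2:{ intros k Hk Hne. rewrite HFX' by lia. ring. }
      rewrite pow_one, pow_diag, HXp by auto. fold d a. unfold fpsX; simpl. ring. }
    rewrite L, Rr, Ham in H.
    apply (Rmult_eq_reg_l d); auto. lra. }
  assert (Hp1 : (-1) ^ (p - 1) = 1).
  { rewrite pow_m1_pred in Hodd by lia. lra. }
  assert (Hnp : n <> p).
  { intros E. rewrite E in Han1. lra. }
  set (m := (n + p - 1)%nat).
  assert (LHS : fps_comp A F m - fps_comp B F m = (A m - B m) + d0 * (INR n * d)).
  { rewrite !comp_val.
    transitivity (sum_f_R0 (fun k => (A k - B k) * fps_pow fpsX k m) m +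
                  sum_f_R0 (fun k => (A k - B k) * (fps_pow F k m - fps_pow fpsX k m)) m).
    rewrite <- minus_sum, <- plus_sum. apply sum_eq; intros; ring.
    rewrite (sum_single _ _ m).
    2: lia.
    2:{ intros k Hk Hne. rewrite powX. destruct (Nat.eqb_spec m k); [lia|ring]. }
    rewrite (sum_single _ _ n).
    2: unfold m; lia.
    2:{ intros k Hk Hne. destruct (Nat.lt_ge_cases k n). rewrite IH by lia. ring.
        rewrite (proj1 (QQ k)) by (unfold m; lia). ring. }
    pose proof (proj2 (QQ n)) as Qn. replace (p + n - 1)%nat with m in Qn by (unfold m; lia).
    rewrite Qn, powX, Nat.eqb_refl, HXp, HF1, pow1. fold d0 d. ring. }
  assert (RHS : fps_comp F A m - fps_comp F B m = (A m - B m) + d * (INR p * a ^ (p - 1) * d0)).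
  { rewrite !comp_val.
    transitivity (sum_f_R0 (fun k => fpsX k * (fps_pow A k m - fps_pow B k m)) m +
                  sum_f_R0 (fun k => (F k - fpsX k) * (fps_pow A k m - fps_pow B k m)) m).
    rewrite <- minus_sum, <- plus_sum. apply sum_eq; intros; ring.
    rewrite (sum_single _ _ 1%nat).
    2: unfold m; lia.
    2:{ intros k Hk Hne. unfold fpsX. destruct (Nat.eqb_spec k 1); [lia|ring]. }
    rewrite (sum_single _ _ p).
    2: unfold m; lia.
    2:{ intros k Hk Hne. destruct (Nat.lt_ge_cases k p). rewrite HFX' by lia. ring.
        rewrite (proj1 (PP k)) by (unfold m; lia). ring. }
    pose proof (proj2 (PP p)) as Pp. fold m in Pp.
    rewrite Pp, !pow_one, HXp. fold d d0. unfold fpsX; simpl. fold a. ring. }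
  rewrite HAF, HBF in LHS. rewrite Ham, Hp1 in RHS.
  assert (Hfin : (INR n - INR p) * d * d0 = 0) by lra.
  assert (INR n - INR p <> 0) by (intro E; apply (not_INR n p Hnp); lra).
  apply Rminus_diag_uniq. fold d0.
  destruct (Rmult_integral _ _ Hfin) as [E|E]; auto.
  destruct (Rmult_integral _ _ E); [contradiction|]. contradiction.
Qed.

Definition Cn (n : nat) (f : R -> R) := forall k x, (k <= n)%nat -> ex_derive_n f k x.

Lemma DnS f j y : Derive_n f (S j) y = Derive_n (Derive f) j y.
Proof.
  assert (H := Derive_n_comp f j 1 y). rewrite Nat.add_1_r in H. rewrite <- H.
  apply Derive_n_ext. intros t. reflexivity.
Qed.

Lemma Derive_n_S_ext f j : forall y, Derive_n f (S j) y = Derive_n (Derive f) j y.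
Proof. intros; apply DnS. Qed.

Lemma exn_S f j x : ex_derive_n f (S (S j)) x <-> ex_derive_n (Derive f) (S j) x.
Proof.
  simpl. split; apply ex_derive_ext; intros t; [|symmetry]; apply DnS.
Qed.

Lemma ex1 f x : ex_derive_n f 1 x -> ex_derive f x.
Proof. intros H. exact H. Qed.
Lemma ex2 f x : ex_derive f x -> ex_derive_n f 1 x.
Proof. intros H. exact H. Qed.

Lemma Cn_S n f : (forall x, ex_derive f x) -> Cn n (Derive f) -> Cn (S n) f.
Proof.
  intros Hd Hc k x Hk. destruct k. exact I. destruct k. apply ex2, Hd.
  apply (proj2 (exn_S f k x)). apply Hc. lia.
Qed.

Lemma Cn_S_inv n f : Cn (S n) f -> (forall x, ex_derive f x) /\ Cn n (Derive f).
Proof.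
  intros Hc. split. intros x. apply ex1, Hc; lia.
  intros k x Hk. destruct k. exact I. apply (proj1 (exn_S f k x)). apply Hc. lia.
Qed.

Lemma Cn_le n m f : (m <= n)%nat -> Cn n f -> Cn m f.
Proof. intros H Hc k x Hk. apply Hc. lia. Qed.

Lemma Cn_ext n f g : (forall x, f x = g x) -> Cn n f -> Cn n g.
Proof. intros H Hc k x Hk. apply (ex_derive_n_ext f). auto. apply Hc; auto. Qed.

Lemma Cn_plus n f g : Cn n f -> Cn n g -> Cn n (fun x => f x + g x).
Proof.
  intros Hf Hg k x Hk. apply ex_derive_n_plus; apply filter_forall; intros y j Hj; [apply Hf|apply Hg]; lia.
Qed.

Lemma Cn_mult n : forall f g, Cn n f -> Cn n g -> Cn n (fun x => f x * g x).
Proof.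
  induction n; intros f g Hf Hg.
  - intros k x Hk. replace k with 0%nat by lia. exact I.
  - destruct (Cn_S_inv _ _ Hf) as [df Hf']. destruct (Cn_S_inv _ _ Hg) as [dg Hg'].
    apply Cn_S. intros x; apply ex_derive_mult; auto.
    apply (Cn_ext n (fun x => Derive f x * g x + f x * Derive g x)).
    intros x; symmetry; apply Derive_mult; auto.
    apply Cn_plus; apply IHn; auto; apply (Cn_le (S n)); auto.
Qed.

Lemma Cn_comp n : forall u v, Cn n u -> Cn n v -> Cn n (fun x => u (v x)).
Proof.
  induction n; intros u v Hu Hv.
  - intros k x Hk. replace k with 0%nat by lia. exact I.
  - destruct (Cn_S_inv _ _ Hu) as [du Hu']. destruct (Cn_S_inv _ _ Hv) as [dv Hv'].
    apply Cn_S. intros x; apply ex_derive_comp; auto.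
    apply (Cn_ext n (fun x => Derive u (v x) * Derive v x)).
    intros x. rewrite (Derive_comp u v x); [apply Rmult_comm|apply du|apply dv].
    apply Cn_mult; auto. apply IHn; auto. apply (Cn_le (S n)); auto.
Qed.

Lemma smooth_Cn f : smooth f <-> forall n, Cn n f.
Proof.
  split. intros H n k x _. apply H. intros H n x. apply (H n n x). lia.
Qed.

Lemma smooth_comp u v : smooth u -> smooth v -> smooth (fun x => u (v x)).
Proof.
  rewrite !smooth_Cn. intros Hu Hv n. apply Cn_comp; auto.
Qed.

Lemma smooth_Derive f : smooth f -> smooth (Derive f).
Proof.
  rewrite !smooth_Cn. intros H n. apply (Cn_S_inv n f). auto.
Qed.

Lemma smooth_id : smooth (fun x => x).
Proof.
  intros n x. apply (ex_derive_n_ext (fun x => x ^ 1)). intros; simpl; ring. apply ex_derive_n_pow.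
Qed.

Lemma smooth_ex_derive f x : smooth f -> ex_derive f x.
Proof. intros H. apply ex1, H. Qed.

Definition tpoly (c : fps) (n : nat) (x : R) : R := sum_f_R0 (fun j => c j * x ^ j) n.

Definition bigO (n : nat) (f : R -> R) : Prop :=
  exists r M, 0 < r /\ 0 <= M /\ forall x, Rabs x < r -> Rabs (f x) <= M * Rabs x ^ (S n).

Definition locbd (f : R -> R) : Prop :=
  exists r M, 0 < r /\ forall x, Rabs x < r -> Rabs (f x) <= M.

Lemma abs_pow_le1 x k : Rabs x <= 1 -> Rabs x ^ k <= 1.
Proof. intros H. rewrite <- (pow1 k). apply pow_incr. split; [apply Rabs_pos|auto]. Qed.

Lemma bigO_ext n f g : (forall x, f x = g x) -> bigO n f -> bigO n g.
Proof. intros E [r [M [Hr [HM H]]]]. exists r, M. repeat split; auto. intros x Hx. rewrite <- E. auto. Qed.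

Lemma bigO_plus n f g : bigO n f -> bigO n g -> bigO n (fun x => f x + g x).
Proof.
  intros [r1 [M1 [Hr1 [HM1 H1]]]] [r2 [M2 [Hr2 [HM2 H2]]]].
  exists (Rmin r1 r2), (M1 + M2). split. apply Rmin_glb_lt; auto. split. lra.
  intros x Hx. pose proof (Rmin_l r1 r2). pose proof (Rmin_r r1 r2).
  eapply Rle_trans. apply Rabs_triang.
  specialize (H1 x ltac:(lra)). specialize (H2 x ltac:(lra)). lra.
Qed.

Lemma bigO_scal n c f : bigO n f -> bigO n (fun x => c * f x).
Proof.
  intros [r [M [Hr [HM H]]]]. exists r, (Rabs c * M). split; auto. split.
  apply Rmult_le_pos; auto; apply Rabs_pos.
  intros x Hx. rewrite Rabs_mult, Rmult_assoc. apply Rmult_le_compat_l. apply Rabs_pos. auto.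
Qed.

Lemma bigO_minus n f g : bigO n f -> bigO n g -> bigO n (fun x => f x - g x).
Proof.
  intros Hf Hg. apply (bigO_ext n (fun x => f x + (-1) * g x)). intros; ring.
  apply bigO_plus; auto. apply bigO_scal; auto.
Qed.

Lemma bigO_zero n : bigO n (fun _ => 0).
Proof. exists 1, 0. repeat split; try lra. intros x _. rewrite Rabs_R0. lra. Qed.

Lemma bigO_mul_bd n f g : bigO n f -> locbd g -> bigO n (fun x => f x * g x).
Proof.
  intros [r1 [M1 [Hr1 [HM1 H1]]]] [r2 [K [Hr2 H2]]].
  assert (HK : 0 <= K). { specialize (H2 0). rewrite Rabs_R0 in H2. pose proof (Rabs_pos (g 0)). specialize (H2 Hr2). lra. }
  exists (Rmin r1 r2), (M1 * K). split. apply Rmin_glb_lt; auto. split. apply Rmult_le_pos; auto.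
  intros x Hx. pose proof (Rmin_l r1 r2). pose proof (Rmin_r r1 r2).
  rewrite Rabs_mult. replace (M1 * K * Rabs x ^ S n) with ((M1 * Rabs x ^ S n) * K) by ring.
  apply Rmult_le_compat; try apply Rabs_pos. apply H1; lra. apply H2; lra.
Qed.

Lemma locbd_plus f g : locbd f -> locbd g -> locbd (fun x => f x + g x).
Proof.
  intros [r1 [M1 [Hr1 H1]]] [r2 [M2 [Hr2 H2]]].
  exists (Rmin r1 r2), (M1 + M2). split. apply Rmin_glb_lt; auto.
  intros x Hx. pose proof (Rmin_l r1 r2). pose proof (Rmin_r r1 r2).
  eapply Rle_trans. apply Rabs_triang. specialize (H1 x ltac:(lra)). specialize (H2 x ltac:(lra)). lra.
Qed.

Lemma locbd_ext f g : (forall x, f x = g x) -> locbd f -> locbd g.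
Proof. intros E [r [M [Hr H]]]. exists r, M. split; auto. intros x Hx. rewrite <- E. auto. Qed.

Lemma locbd_bigO n f : bigO n f -> locbd f.
Proof.
  intros [r [M [Hr [HM H]]]]. exists (Rmin r 1), M. split. apply Rmin_glb_lt; lra.
  intros x Hx. pose proof (Rmin_l r 1). pose proof (Rmin_r r 1).
  eapply Rle_trans. apply H; lra. rewrite <- (Rmult_1_r M) at 2. apply Rmult_le_compat_l; auto.
  apply abs_pow_le1; lra.
Qed.

Lemma locbd_poly c n : locbd (tpoly c n).
Proof.
  exists 1, (sum_f_R0 (fun j => Rabs (c j)) n). split. lra. intros x Hx.
  unfold tpoly. eapply Rle_trans. apply sum_f_R0_triangle. apply sum_Rle. intros j Hj.
  rewrite Rabs_mult, <- RPow_abs. rewrite <- (Rmult_1_r (Rabs (c j))) at 2.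
  apply Rmult_le_compat_l. apply Rabs_pos. apply abs_pow_le1; lra.
Qed.

Lemma bigO_xpow n g : locbd g -> bigO n (fun x => x ^ (S n) * g x).
Proof.
  intros Hg. apply bigO_mul_bd; auto. exists 1, 1. repeat split; try lra.
  intros x _. rewrite <- RPow_abs. lra.
Qed.

Lemma bigO_sum n (F : nat -> R -> R) N : (forall k, (k <= N)%nat -> bigO n (F k)) ->
  bigO n (fun x => sum_f_R0 (fun k => F k x) N).
Proof.
  induction N; intros H. simpl. apply H; lia.
  simpl. apply bigO_plus. apply IHN. intros; apply H; lia. apply H; lia.
Qed.

Lemma bigO_weaken n f : bigO (S n) f -> bigO n f.
Proof.
  intros [r [M [Hr [HM H]]]]. exists (Rmin r 1), M. split. apply Rmin_glb_lt; lra. split; auto.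
  intros x Hx. pose proof (Rmin_l r 1). pose proof (Rmin_r r 1).
  eapply Rle_trans. apply H; lra. apply Rmult_le_compat_l; auto.
  change (Rabs x ^ S (S n)) with (Rabs x * Rabs x ^ S n).
  rewrite <- (Rmult_1_l (Rabs x ^ S n)) at 2. apply Rmult_le_compat_r.
  apply pow_le, Rabs_pos. lra.
Qed.

Lemma bigO_comp n R v : bigO n R -> bigO 0 v -> bigO n (fun x => R (v x)).
Proof.
  intros [r1 [M1 [Hr1 [HM1 H1]]]] [r2 [C [Hr2 [HC H2]]]].
  exists (Rmin r2 (r1 / (C + 1))), (M1 * C ^ S n). split.
  apply Rmin_glb_lt; auto. apply Rdiv_lt_0_compat; lra. split.
  apply Rmult_le_pos; auto. apply pow_le; auto.
  intros x Hx. pose proof (Rmin_l r2 (r1 / (C + 1))). pose proof (Rmin_r r2 (r1 / (C + 1))).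
  assert (Hv : Rabs (v x) <= C * Rabs x). { specialize (H2 x ltac:(lra)). simpl in H2. lra. }
  assert (Hv2 : Rabs (v x) < r1).
  { assert (Rabs x * (C + 1) < r1).
    { apply (Rmult_lt_reg_r (/ (C+1))). apply Rinv_0_lt_compat; lra.
      rewrite Rmult_assoc, Rinv_r by lra. unfold Rdiv in *. lra. }
    pose proof (Rabs_pos x). nra. }
  eapply Rle_trans. apply H1; auto. rewrite Rmult_assoc. apply Rmult_le_compat_l; auto.
  rewrite <- Rpow_mult_distr. apply pow_incr. split. apply Rabs_pos. auto.
Qed.

Lemma small_zero c r M : 0 < r -> 0 <= M -> (forall x, 0 < x < r -> Rabs c <= M * x) -> c = 0.
Proof.
  intros Hr HM H. destruct (Req_dec c 0) as [|Hc]; auto. exfalso.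
  assert (Hac : 0 < Rabs c) by (apply Rabs_pos_lt; auto).
  set (x := Rmin (r / 2) (Rabs c / (2 * (M + 1)))).
  assert (Hx1 : x <= r / 2) by apply Rmin_l. assert (Hx2 : x <= Rabs c / (2 * (M + 1))) by apply Rmin_r.
  assert (Hxp : 0 < x). { apply Rmin_glb_lt. lra. apply Rdiv_lt_0_compat; lra. }
  specialize (H x ltac:(lra)).
  assert (M * x <= M * (Rabs c / (2 * (M + 1)))) by (apply Rmult_le_compat_l; auto).
  assert (M * (Rabs c / (2 * (M + 1))) < Rabs c).
  { unfold Rdiv. replace (M * (Rabs c * / (2 * (M + 1)))) with (Rabs c * (M / (2 * (M + 1)))) by (field; lra).
    rewrite <- (Rmult_1_r (Rabs c)) at 2. apply Rmult_lt_compat_l; auto.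
    apply (Rmult_lt_reg_r (2 * (M + 1))). lra. unfold Rdiv. rewrite Rmult_assoc, Rinv_l by lra. lra. }
  lra.
Qed.

Lemma poly_S c n x : tpoly c (S n) x = tpoly c n x + c (S n) * x ^ (S n).
Proof. reflexivity. Qed.

Lemma poly_zero_coef c n x : (forall j, (j <= n)%nat -> c j = 0) -> tpoly c n x = 0.
Proof. intros H. apply sum_zero. intros j Hj. rewrite H; auto. ring. Qed.

Lemma uniq_poly n : forall c, bigO n (tpoly c n) -> forall j, (j <= n)%nat -> c j = 0.
Proof.
  induction n; intros c Hb.
  - intros j Hj. replace j with 0%nat by lia. destruct Hb as [r [M [Hr [HM H]]]].
    apply (small_zero _ r M); auto. intros x Hx. specialize (H x).
    unfold tpoly in H. simpl in H. rewrite (Rabs_pos_eq x) in H by lra. rewrite !Rmult_1_r in H.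
    apply H. lra.
  - assert (Hc : forall j, (j <= n)%nat -> c j = 0).
    { apply IHn. apply (bigO_ext n (fun x => tpoly c (S n) x + (- c (S n)) * (x ^ S n * 1))).
      intros x. rewrite poly_S. ring. apply bigO_plus. apply bigO_weaken; auto.
      apply bigO_scal. apply bigO_xpow. exists 1, 1. split; [lra|]. intros; rewrite Rabs_R1; lra. }
    intros j Hj. destruct (Nat.eq_dec j (S n)) as [->|Hne]; [|apply Hc; lia].
    destruct Hb as [r [M [Hr [HM H]]]].
    apply (small_zero _ r M); auto. intros x Hx. specialize (H x).
    rewrite poly_S, poly_zero_coef in H by auto. rewrite Rplus_0_l, Rabs_mult in H.
    rewrite (Rabs_pos_eq x) in H by lra. rewrite (Rabs_pos_eq (x ^ S n)) in H by (apply pow_le; lra).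
    assert (Hxp : 0 < x ^ S n) by (apply pow_lt; lra).
    apply (Rmult_le_reg_r (x ^ S n)); auto. replace (M * x * x ^ S n) with (M * x ^ S (S n)) by (simpl; ring).
    apply H. lra.
Qed.

Lemma bound_cont g : (forall t, continuous g t) -> exists K, 0 <= K /\ forall t, -1 <= t <= 1 -> Rabs (g t) <= K.
Proof.
  intros Hc.
  assert (Hc1 : forall t, continuity_pt g t) by (intros t; apply continuity_pt_filterlim, Hc).
  destruct (continuity_ab_maj g (-1) 1 ltac:(lra) (fun t _ => Hc1 t)) as [a [Ha _]].
  destruct (continuity_ab_maj (fun t => - g t) (-1) 1 ltac:(lra) (fun t _ => continuity_pt_opp _ _ (Hc1 t))) as [b [Hb _]].
  exists (Rabs (g a) + Rabs (g b)). split. pose proof (Rabs_pos (g a)); pose proof (Rabs_pos (g b)); lra.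
  intros t Ht. specialize (Ha t Ht). specialize (Hb t Ht). simpl in Hb.
  pose proof (Rle_abs (g a)). pose proof (Rle_abs (- g b)). rewrite Rabs_Ropp in H0.
  pose proof (Rabs_pos (g a)); pose proof (Rabs_pos (g b)).
  unfold Rabs at 1. destruct (Rcase_abs (g t)); lra.
Qed.

Lemma poly_at0 c n : tpoly c n 0 = c 0%nat.
Proof.
  unfold tpoly. rewrite (sum_single _ _ 0%nat). simpl; ring. lia.
  intros j Hj Hne. rewrite pow_i by lia. ring.
Qed.

Lemma taylor0_0 f : taylor0 f 0%nat = f 0.
Proof. unfold taylor0. simpl. field. Qed.

Lemma taylor_pos f n : smooth f -> exists M, 0 <= M /\
  forall x, 0 < x < 1 -> Rabs (f x - tpoly (taylor0 f) n x) <= M * x ^ S n.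
Proof.
  intros Hs.
  assert (Hc : forall t, continuous (Derive_n f (S n)) t).
  { intros t. apply (ex_derive_continuous (Derive_n f (S n)) t). pose proof (Hs (S (S n)) t) as E. exact E. }
  destruct (bound_cont _ Hc) as [K [HK HKb]].
  assert (Hf : 0 < INR (fact (S n))) by (apply INR_fact_lt_0).
  exists (K / INR (fact (S n))). split. apply Rdiv_le_0_compat; auto.
  intros x Hx.
  destruct (Taylor_Lagrange f n 0 x ltac:(lra) (fun t _ k _ => Hs k t)) as [z [Hz E]].
  assert (Ep : tpoly (taylor0 f) n x = sum_f_R0 (fun m => (x - 0) ^ m / INR (fact m) * Derive_n f m 0) n).
  { unfold tpoly, taylor0. apply sum_eq. intros j _. replace (x - 0) with x by ring.
    field. apply INR_fact_neq_0. }
  rewrite E, Ep. replace (x - 0) with x by ring.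
  match goal with |- Rabs (?s + ?r - ?s) <= _ => replace (s + r - s) with r by ring end.
  rewrite Rabs_mult. unfold Rdiv. rewrite Rabs_mult.
  rewrite (Rabs_pos_eq (x ^ S n)) by (apply pow_le; lra).
  rewrite (Rabs_pos_eq (/ _)) by (left; apply Rinv_0_lt_compat; auto).
  replace (K * / INR (fact (S n)) * x ^ S n) with (x ^ S n * / INR (fact (S n)) * K) by ring.
  apply Rmult_le_compat_l. apply Rmult_le_pos. apply pow_le; lra. left; apply Rinv_0_lt_compat; auto.
  apply HKb. lra.
Qed.

Lemma smooth_opp f : smooth f -> smooth (fun t => f (- t)).
Proof.
  intros H. apply smooth_comp; auto. intros n x. apply ex_derive_n_opp. apply smooth_id.
Qed.

Lemma taylor_opp f j : smooth f -> taylor0 (fun t => f (- t)) j = (-1) ^ j * taylor0 f j.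
Proof.
  intros H. unfold taylor0. rewrite Derive_n_comp_opp. rewrite Ropp_0. unfold Rdiv. ring.
  apply filter_forall. intros y k _. apply H.
Qed.

Lemma taylor_L1 f n : smooth f -> bigO n (fun x => f x - tpoly (taylor0 f) n x).
Proof.
  intros Hs.
  destruct (taylor_pos f n Hs) as [M1 [HM1 H1]].
  destruct (taylor_pos (fun t => f (- t)) n (smooth_opp f Hs)) as [M2 [HM2 H2]].
  exists 1, (M1 + M2). split. lra. split. lra.
  intros x Hx. destruct (Rtotal_order x 0) as [Hn|[Hz|Hp]].
  - specialize (H2 (- x) ltac:(split; [lra|]; rewrite Rabs_left in Hx; lra)).
    rewrite Ropp_involutive in H2.
    assert (Ep : tpoly (taylor0 (fun t => f (- t))) n (- x) = tpoly (taylor0 f) n x).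
    { unfold tpoly. apply sum_eq. intros j _. rewrite taylor_opp by auto.
      replace (- x) with ((-1) * x) by ring. rewrite Rpow_mult_distr.
      replace ((-1) ^ j * taylor0 f j * ((-1) ^ j * x ^ j)) with (((-1) ^ j * (-1) ^ j) * taylor0 f j * x ^ j) by ring.
      rewrite <- Rpow_mult_distr. replace (-1 * -1) with 1 by ring. rewrite pow1. ring. }
    rewrite Ep in H2. rewrite (Rabs_left x) by lra.
    assert (0 <= (- x) ^ S n) by (apply pow_le; lra). nra.
  - subst. rewrite poly_at0, taylor0_0. replace (f 0 - f 0) with 0 by ring. rewrite Rabs_R0.
    apply Rmult_le_pos. lra. apply pow_le; lra.
  - specialize (H1 x ltac:(split; [lra|]; rewrite Rabs_pos_eq in Hx; lra)).
    rewrite (Rabs_pos_eq x) by lra.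
    assert (0 <= x ^ S n) by (apply pow_le; lra). nra.
Qed.

Lemma taylor_unique f c n : smooth f -> bigO n (fun x => f x - tpoly c n x) -> taylor0 f n = c n.
Proof.
  intros Hs Hb. pose proof (taylor_L1 f n Hs) as HT.
  assert (H := uniq_poly n (fun j => c j - taylor0 f j)).
  apply Rminus_diag_uniq_sym. apply H; auto.
  apply (bigO_ext n (fun x => (f x - tpoly (taylor0 f) n x) - (f x - tpoly c n x))).
  intros x. transitivity (tpoly c n x - tpoly (taylor0 f) n x). ring. unfold tpoly. rewrite <- minus_sum. apply sum_eq. intros j _. ring.
  apply bigO_minus; auto.
Qed.

Lemma locbd_mono c k : locbd (fun x => c * x ^ k).
Proof.
  exists 1, (Rabs c). split. lra. intros x Hx. rewrite Rabs_mult, <- RPow_abs.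
  rewrite <- (Rmult_1_r (Rabs c)) at 2. apply Rmult_le_compat_l. apply Rabs_pos. apply abs_pow_le1; lra.
Qed.

Lemma prod_lemma a b n : bigO n (fun x => tpoly a n x * tpoly b n x - tpoly (fps_mul a b) n x).
Proof.
  destruct n as [|n'].
  - apply (bigO_ext 0 (fun _ => 0)). intros x. unfold tpoly, fps_mul. simpl. ring. apply bigO_zero.
  - set (N := S n').
    apply (bigO_ext N (fun x => sum_f_R0 (fun k => sum_f_R0 (fun l => (a (S (l + k)) * x ^ (S (l + k))) * (b (N - l)%nat * x ^ (N - l))) (Init.Nat.pred (N - k))) (Init.Nat.pred N))).
    { intros x. unfold tpoly at 1 2. rewrite cauchy_finite by (unfold N; lia).
      assert (E : sum_f_R0 (fun k => sum_f_R0 (fun p => a p * x ^ p * (b (k - p)%nat * x ^ (k - p))) k) N = tpoly (fps_mul a b) N x).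
      { unfold tpoly, fps_mul. apply sum_eq. intros k Hk. rewrite (Rmult_comm _ (x ^ k)), scal_sum. apply sum_eq. intros p Hp.
        replace (x ^ k) with (x ^ p * x ^ (k - p)) by (rewrite <- pow_add; f_equal; lia). ring. }
      rewrite E. ring. }
    apply bigO_sum. intros k Hk. apply bigO_sum. intros l Hl.
    apply (bigO_ext N (fun x => x ^ S N * (a (S (l + k)) * b (N - l)%nat * x ^ k))).
    { intros x. assert (E : x ^ S (l + k) * x ^ (N - l) = x ^ S N * x ^ k)
        by (rewrite <- !pow_add; f_equal; unfold N in *; lia).
      transitivity (a (S (l + k)) * b (N - l)%nat * (x ^ S (l + k) * x ^ (N - l))).
      rewrite E; ring. ring. }
    apply bigO_xpow. apply locbd_mono.
Qed.

Lemma tpoly_one n x : tpoly fps_one n x = 1.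
Proof.
  unfold tpoly. rewrite (sum_single _ _ 0%nat). unfold fps_one; simpl; ring. lia.
  intros j Hj Hne. unfold fps_one. destruct (Nat.eqb_spec j 0); [lia|ring].
Qed.

Lemma locbd_smooth v : smooth v -> locbd v.
Proof.
  intros Hs. apply (locbd_ext (fun x => (v x - tpoly (taylor0 v) 0 x) + tpoly (taylor0 v) 0 x)).
  intros; ring. apply locbd_plus. apply (locbd_bigO 0). apply taylor_L1; auto. apply locbd_poly.
Qed.

Lemma pow_lemma v n : smooth v -> forall k, bigO n (fun x => v x ^ k - tpoly (fps_pow (taylor0 v) k) n x).
Proof.
  intros Hs k. induction k.
  - apply (bigO_ext n (fun _ => 0)). intros x. simpl. rewrite tpoly_one. ring. apply bigO_zero.
  - set (T := taylor0 v) in *.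
    apply (bigO_ext n (fun x => (v x ^ k - tpoly (fps_pow T k) n x) * v x +
       (v x - tpoly T n x) * tpoly (fps_pow T k) n x +
       (tpoly T n x * tpoly (fps_pow T k) n x - tpoly (fps_mul T (fps_pow T k)) n x))).
    { intros x. change (fps_pow T (S k)) with (fps_mul T (fps_pow T k)). simpl. ring. }
    apply bigO_plus. apply bigO_plus.
    apply bigO_mul_bd; auto. apply locbd_smooth; auto.
    apply bigO_mul_bd. apply taylor_L1; auto. apply locbd_poly.
    apply prod_lemma.
Qed.

Lemma sum_swap (f : nat -> nat -> R) N M :
  sum_f_R0 (fun k => sum_f_R0 (fun m => f k m) M) N = sum_f_R0 (fun m => sum_f_R0 (fun k => f k m) N) M.
Proof.
  induction N. reflexivity. simpl. rewrite IHN. rewrite <- plus_sum. reflexivity.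
Qed.

Lemma sum_trunc (f : nat -> R) m N : (m <= N)%nat -> (forall k, (m < k <= N)%nat -> f k = 0) ->
  sum_f_R0 f N = sum_f_R0 f m.
Proof.
  induction N; intros Hm H. replace m with 0%nat by lia. reflexivity.
  destruct (Nat.eq_dec m (S N)) as [->|Hne]. reflexivity.
  simpl. rewrite IHN by (try lia; intros; apply H; lia). rewrite (H (S N)) by lia. ring.
Qed.

Lemma comp_identity a b n x : b 0%nat = 0 ->
  sum_f_R0 (fun k => a k * tpoly (fps_pow b k) n x) n = tpoly (fps_comp a b) n x.
Proof.
  intros Hb0. unfold tpoly, fps_comp.
  transitivity (sum_f_R0 (fun k => sum_f_R0 (fun m => a k * fps_pow b k m * x ^ m) n) n).
  { apply sum_eq. intros k _. rewrite scal_sum. apply sum_eq. intros; ring. }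
  rewrite sum_swap. apply sum_eq. intros m Hm. rewrite (Rmult_comm _ (x ^ m)), scal_sum.
  apply sum_trunc; auto. intros k Hk. rewrite (pow_low b Hb0 k m) by lia. ring.
Qed.

Lemma comp_lemma u v n : smooth u -> smooth v -> v 0 = 0 ->
  bigO n (fun x => u (v x) - tpoly (fps_comp (taylor0 u) (taylor0 v)) n x).
Proof.
  intros Hu Hv Hv0.
  assert (Hb0 : taylor0 v 0%nat = 0) by (rewrite taylor0_0; auto).
  apply (bigO_ext n (fun x => (u (v x) - tpoly (taylor0 u) n (v x)) +
     sum_f_R0 (fun k => taylor0 u k * (v x ^ k - tpoly (fps_pow (taylor0 v) k) n x)) n)).
  { intros x. rewrite <- (comp_identity _ _ n x Hb0). unfold tpoly at 1.
    assert (E : sum_f_R0 (fun k => taylor0 u k * (v x ^ k - tpoly (fps_pow (taylor0 v) k) n x)) n =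
       sum_f_R0 (fun j => taylor0 u j * v x ^ j) n - sum_f_R0 (fun k => taylor0 u k * tpoly (fps_pow (taylor0 v) k) n x) n).
    { rewrite <- minus_sum. apply sum_eq. intros; ring. }
    rewrite E. ring. }
  apply bigO_plus.
  - apply (bigO_comp n (fun y => u y - tpoly (taylor0 u) n y) v). apply taylor_L1; auto.
    apply (bigO_ext 0 (fun x => v x - tpoly (taylor0 v) 0 x)).
    intros x. unfold tpoly. simpl. rewrite Hb0. ring. apply taylor_L1; auto.
  - apply bigO_sum. intros k _. apply bigO_scal. apply pow_lemma; auto.
Qed.

Lemma bridge u v : smooth u -> smooth v -> v 0 = 0 ->
  taylor0 (fun x => u (v x)) = fps_comp (taylor0 u) (taylor0 v).
Proof.
  intros Hu Hv Hv0. apply functional_extensionality. intros n.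
  apply taylor_unique. apply smooth_comp; auto. apply comp_lemma; auto.
Qed.

Lemma taylor_id : taylor0 (fun x => x) = fpsX.
Proof.
  apply functional_extensionality. intros n. apply taylor_unique. apply smooth_id.
  destruct n.
  - apply (bigO_ext 0 (fun x => x)). intros x. unfold tpoly, fpsX. simpl. ring.
    exists 1, 1. repeat split; try lra. intros x _. simpl. lra.
  - apply (bigO_ext (S n) (fun _ => 0)). intros x. unfold tpoly.
    rewrite (sum_single _ _ 1%nat). unfold fpsX. simpl. ring. lia.
    intros j Hj Hne. unfold fpsX. destruct (Nat.eqb_spec j 1); [lia|ring]. apply bigO_zero.
Qed.

Definition glue (p q : R -> R) (x : R) : R := if Rle_dec 0 x then p x else q x.

Lemma glue_pos p q x : 0 <= x -> glue p q x = p x.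
Proof. intros H. unfold glue. destruct (Rle_dec 0 x); [reflexivity|lra]. Qed.

Lemma glue_neg p q x : x < 0 -> glue p q x = q x.
Proof. intros H. unfold glue. destruct (Rle_dec 0 x); [lra|reflexivity]. Qed.

Lemma glue_derive0 p q l : is_derive p 0 l -> is_derive q 0 l -> p 0 = q 0 -> is_derive (glue p q) 0 l.
Proof.
  rewrite !is_derive_Reals. intros Hp Hq E eps Heps.
  destruct (Hp eps Heps) as [d1 H1]. destruct (Hq eps Heps) as [d2 H2].
  assert (Hd : 0 < Rmin d1 d2) by (apply Rmin_glb_lt; apply cond_pos).
  exists (mkposreal _ Hd). intros h Hh Hha. simpl in Hha.
  pose proof (Rmin_l d1 d2). pose proof (Rmin_r d1 d2).
  rewrite (glue_pos p q 0) by lra.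
  destruct (Rle_dec 0 h).
  - rewrite glue_pos by lra. apply H1; auto. lra.
  - rewrite glue_neg by lra. rewrite E. apply H2; auto. lra.
Qed.

Lemma glue_derive p q p' q' : (forall x, is_derive p x (p' x)) -> (forall x, is_derive q x (q' x)) ->
  p 0 = q 0 -> p' 0 = q' 0 -> forall x, is_derive (glue p q) x (glue p' q' x).
Proof.
  intros Hp Hq E E' x. destruct (Rtotal_order x 0) as [Hn|[Hz|Hpos]].
  - rewrite glue_neg by auto. apply (is_derive_ext_loc q). 2: apply Hq.
    apply (filter_imp (fun u => u < 0)). intros u Hu. rewrite glue_neg; auto.
    apply (open_lt 0 x Hn).
  - subst. rewrite glue_pos by lra. apply glue_derive0; auto. rewrite E'. auto.
  - rewrite glue_pos by lra. apply (is_derive_ext_loc p). 2: apply Hp.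
    apply (filter_imp (fun u => 0 < u)). intros u Hu. rewrite glue_pos; auto. lra.
    apply (open_gt 0 x Hpos).
Qed.

Lemma smooth_is_derive p n x : smooth p -> is_derive (Derive_n p n) x (Derive_n p (S n) x).
Proof.
  intros H. apply (Derive_correct (Derive_n p n) x). pose proof (H (S n) x) as E. exact E.
Qed.

Lemma glue_smooth p q : smooth p -> smooth q -> (forall n, Derive_n p n 0 = Derive_n q n 0) ->
  smooth (glue p q).
Proof.
  intros Hp Hq E.
  assert (K : forall n, (forall x, Derive_n (glue p q) n x = glue (Derive_n p n) (Derive_n q n) x)
                        /\ (forall x, ex_derive_n (glue p q) n x)).
  { induction n as [|n [IH1 IH2]].
    - split. intros x. reflexivity. intros x. exact I.
    - assert (D : forall x, is_derive (glue (Derive_n p n) (Derive_n q n)) x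
                              (glue (Derive_n p (S n)) (Derive_n q (S n)) x)).
      { apply glue_derive. intros; apply smooth_is_derive; auto. intros; apply smooth_is_derive; auto.
        apply E. apply E. }
      split.
      + intros x. transitivity (Derive (glue (Derive_n p n) (Derive_n q n)) x).
        apply Derive_ext. apply IH1. apply is_derive_unique. apply D.
      + intros x. simpl. apply (ex_derive_ext (glue (Derive_n p n) (Derive_n q n))).
        intros t; symmetry; apply IH1. eexists. apply D. }
  intros n x. apply K.
Qed.

Lemma taylor_eq_Dn p q : taylor0 p = taylor0 q -> forall n, Derive_n p n 0 = Derive_n q n 0.
Proof.
  intros H n. assert (E := f_equal (fun c => c n) H). simpl in E. unfold taylor0 in E.
  apply (Rmult_eq_reg_r (/ INR (fact n))). exact E.
  apply Rinv_neq_0_compat, INR_fact_neq_0.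
Qed.

Lemma inv_decr f finv : (forall x y, x < y -> f y < f x) -> (forall x, f (finv x) = x) ->
  forall x y, x < y -> finv y < finv x.
Proof.
  intros Hd Hi x y Hxy. destruct (Rtotal_order (finv y) (finv x)) as [H|[H|H]]; auto.
  - exfalso. rewrite <- (Hi x), <- (Hi y) in Hxy. rewrite H in Hxy. lra.
  - exfalso. specialize (Hd _ _ H). rewrite !Hi in Hd. lra.
Qed.

Lemma deriv_neg f finv : smooth f -> smooth finv -> (forall x, finv (f x) = x) ->
  (forall x y, x < y -> f y < f x) -> Derive f 0 < 0.
Proof.
  intros Hs Hsi Hi Hd.
  assert (Hle : Derive f 0 <= 0).
  { set (pr := fun x => ex_derive_Reals_0 f x (smooth_ex_derive f x Hs)).
    rewrite <- (Derive_Reals f 0 (pr 0)). apply (nonpos_derivative_0 f pr).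
    intros x y Hxy. destruct Hxy as [Hlt|Heq]. left; apply Hd; auto. subst; right; reflexivity. }
  assert (Hne : Derive f 0 <> 0).
  { intros Z. assert (E : Derive (fun x => finv (f x)) 0 = Derive f 0 * Derive finv (f 0)).
    { apply Derive_comp. apply smooth_ex_derive; auto. apply smooth_ex_derive; auto. }
    rewrite (Derive_ext _ id) in E by (intros; apply Hi). rewrite Derive_id, Z in E. lra. }
  lra.
Qed.

Theorem theorem3p2 (f g : R -> R) :
  is_diffeo_minus f -> is_diffeo_minus g ->
  f 0 = 0 -> g 0 = 0 ->
  (forall x, f (f x) = g (g x)) ->
  fps_comp (taylor0 f) (taylor0 f) <> fpsX ->
  taylor0 f = taylor0 g /\
  exists h hinv : R -> R,
    is_diffeo_plus h /\
    (forall x, hinv (h x) = x) /\ (forall x, h (hinv x) = x) /\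
    (forall x, f x = hinv (g (h x))).
Proof.
  intros [[Hfs [finv [Hfis [Hfi1 Hfi2]]]] Hfd] [[Hgs [ginv [Hgis [Hgi1 Hgi2]]]] Hgd] Hf0 Hg0 Hfg HX.
  assert (Hffs : smooth (fun x => f (f x))) by (apply smooth_comp; auto).
  assert (Hggs : smooth (fun x => g (g x))) by (apply smooth_comp; auto).
  assert (EFG : (fun x => f (f x)) = (fun x => g (g x))) by (apply functional_extensionality; auto).
  set (F := taylor0 (fun x => f (f x))).
  assert (HAA : fps_comp (taylor0 f) (taylor0 f) = F) by (unfold F; symmetry; apply bridge; auto).
  assert (HBB : fps_comp (taylor0 g) (taylor0 g) = F).
  { unfold F. rewrite EFG. symmetry; apply bridge; auto. }
  assert (HAF : fps_comp (taylor0 f) F = fps_comp F (taylor0 f)).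
  { unfold F. rewrite <- (bridge f (fun x => f (f x))) by (auto; rewrite !Hf0; auto).
    rewrite <- (bridge (fun x => f (f x)) f) by auto. reflexivity. }
  assert (HBF : fps_comp (taylor0 g) F = fps_comp F (taylor0 g)).
  { unfold F. rewrite EFG. rewrite <- (bridge g (fun x => g (g x))) by (auto; rewrite !Hg0; auto).
    rewrite <- (bridge (fun x => g (g x)) g) by auto. reflexivity. }
  assert (Ha1 : taylor0 f 1%nat < 0).
  { unfold taylor0. simpl. pose proof (deriv_neg f finv Hfs Hfis Hfi1 Hfd).
    replace (1 + 0) with 1 by ring. unfold Rdiv. rewrite Rinv_1, Rmult_1_r. exact H. }
  assert (Hb1 : taylor0 g 1%nat < 0).
  { unfold taylor0. simpl. pose proof (deriv_neg g ginv Hgs Hgis Hgi1 Hgd).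
    replace (1 + 0) with 1 by ring. unfold Rdiv. rewrite Rinv_1, Rmult_1_r. exact H. }
  assert (HTfg : taylor0 f = taylor0 g).
  { apply functional_extensionality. apply (formal_main _ _ F).
    rewrite taylor0_0; auto. rewrite taylor0_0; auto. auto. auto. auto. auto. auto. auto.
    rewrite <- HAA. auto. }
  split; auto.
  assert (Hfinv0 : finv 0 = 0) by (rewrite <- Hf0 at 1; apply Hfi1).
  assert (Hginv0 : ginv 0 = 0) by (rewrite <- Hg0 at 1; apply Hgi1).
  assert (Hfid := inv_decr f finv Hfd Hfi2). assert (Hgid := inv_decr g ginv Hgd Hgi2).
  set (k := fun x => ginv (f x)). set (k' := fun x => finv (g x)).
  assert (Hks : smooth k) by (apply (smooth_comp ginv f); auto).
  assert (Hk's : smooth k') by (apply (smooth_comp finv g); auto).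
  assert (Tk : taylor0 k = taylor0 (fun x => x)).
  { unfold k. rewrite bridge by auto. rewrite HTfg. rewrite <- bridge by auto.
    f_equal. apply functional_extensionality. auto. }
  assert (Tk' : taylor0 k' = taylor0 (fun x => x)).
  { unfold k'. rewrite bridge by auto. rewrite <- HTfg. rewrite <- bridge by auto.
    f_equal. apply functional_extensionality. auto. }
  assert (Hkneg : forall x, x < 0 -> k x < 0).
  { intros x Hx. unfold k. rewrite <- Hginv0. apply Hgid. rewrite <- Hf0. apply Hfd. auto. }
  assert (Hk'neg : forall x, x < 0 -> k' x < 0).
  { intros x Hx. unfold k'. rewrite <- Hfinv0. apply Hfid. rewrite <- Hg0. apply Hgd. auto. }
  exists (glue (fun x => x) k), (glue (fun x => x) k').
  assert (I1 : forall x, glue (fun x => x) k' (glue (fun x => x) k x) = x).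
  { intros x. destruct (Rle_dec 0 x).
    - rewrite (glue_pos _ k x) by auto. rewrite glue_pos by auto. reflexivity.
    - rewrite (glue_neg _ _ x) by lra. rewrite glue_neg by (apply Hkneg; lra).
      unfold k, k'. rewrite Hgi2. auto. }
  assert (I2 : forall x, glue (fun x => x) k (glue (fun x => x) k' x) = x).
  { intros x. destruct (Rle_dec 0 x).
    - rewrite (glue_pos _ k' x) by auto. rewrite glue_pos by auto. reflexivity.
    - rewrite (glue_neg _ _ x) by lra. rewrite glue_neg by (apply Hk'neg; lra).
      unfold k, k'. rewrite Hfi2. auto. }
  split; [|split; [|split]]; auto.
  - split. split.
    + apply glue_smooth; auto. apply smooth_id. intros n. symmetry. apply taylor_eq_Dn. auto.
    + exists (glue (fun x => x) k'). split; [|split]; auto.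
      apply glue_smooth; auto. apply smooth_id. intros n. symmetry. apply taylor_eq_Dn. auto.
    + intros x y Hxy. destruct (Rle_dec 0 x); destruct (Rle_dec 0 y).
      * rewrite !glue_pos by auto. auto.
      * lra.
      * rewrite (glue_neg _ _ x) by lra. rewrite (glue_pos _ _ y) by auto.
        pose proof (Hkneg x ltac:(lra)). lra.
      * rewrite !glue_neg by lra. unfold k. apply Hgid. apply Hfd. auto.
  - intros x. destruct (Rle_dec 0 x).
    + rewrite (glue_pos _ _ x) by auto. destruct r as [Hp|Hz].
      * rewrite glue_neg by (rewrite <- Hg0; apply Hgd; auto). unfold k'.
        rewrite <- Hfg. symmetry. apply Hfi1.
      * subst. rewrite Hg0, glue_pos by lra. auto.
    + rewrite (glue_neg _ _ x) by lra. unfold k at 1. rewrite Hgi2.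
      rewrite glue_pos. reflexivity. left. rewrite <- Hf0. apply Hfd. lra.
Qed.
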